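(* Let $H$ be a real Hilbert space, $A:H\to c_0$ bounded linear with adjoint $A^*:\ell^1\to H$ (identifying $c_0^*=\ell^1$), and assume $A$ and $A^*$ are injective. Let $u^\dagger\in\ell^1$ and suppose there exists $v^\dagger\in H$ with $\|Av^\dagger\|_\infty\le1$ and $(Av^\dagger)_i=\operatorname{sign}(u^\dagger_i)$ whenever $u^\dagger_i\ne0$. Then there exists $v^\ddagger\in H$ with $\|Av^\ddagger\|_\infty\le1$, $(Av^\ddagger)_i=\operatorname{sign}(u^\dagger_i)$ whenever $u^\dagger_i\ne0$, and $|(Av^\ddagger)_i|<1$ whenever $u^\dagger_i=0$.
   Context: $A^*$ is defined by $\langle A^*u,z\rangle=\sum_iu_i(Az)_i$. $\operatorname{sign}(t)=t/|t|$ for $t\neq0$. *)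

(* Defs.v *)
From HB Require Import structures.
From mathcomp Require Import all_boot all_order all_algebra.
From mathcomp Require Import all_classical all_reals all_analysis.
Set Implicit Arguments. Unset Strict Implicit. Unset Printing Implicit Defensive.
Import Order.TTheory GRing.Theory Num.Theory.
Import numFieldNormedType.Exports.
Local Open Scope ring_scope.
Local Open Scope classical_set_scope.

(* [inner] is a real inner product on H inducing the norm of H:
   together with completeness of H this makes H a real Hilbert space. *)
Definition is_inner_product (R : realType) (H : normedModType R)
  (inner : H -> H -> R) : Prop :=
  [/\ (forall x y, inner x y = inner y x),
      (forall a x y z, inner (a *: x + y) z = a * inner x z + inner y z),
      (forall x, 0 <= inner x x) &
      (forall x, inner x x = `|x| ^+ 2)].

Definition in_c0 (R : realType) (u : nat -> R) : Prop := u @ \oo --> (0 : R).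

Definition in_l1 (R : realType) (u : nat -> R) : Prop :=
  cvgn (series (fun i => `|u i|)).

Definition ser_sum (R : realType) (u : nat -> R) : R := limn (series u).

Definition bounded_linear_to_c0 (R : realType) (H : normedModType R)
  (A : H -> nat -> R) : Prop :=
  [/\ (forall a x y, A (a *: x + y) = (fun i => a * A x i + A y i)),
      (forall x, in_c0 (A x)) &
      (exists C : R, forall x i, `|A x i| <= C * `|x|)].

Definition is_adjoint (R : realType) (H : normedModType R)
  (inner : H -> H -> R) (A : H -> nat -> R) (Astar : (nat -> R) -> H) : Prop :=
  forall u, in_l1 u -> forall z, inner (Astar u) z = ser_sum (fun i => u i * A z i).

Definition sgn (R : realType) (t : R) : R := t / `|t|.

(* Main.v *)
Require Import Defs.
From HB Require Import structures.
From mathcomp Require Import all_boot all_order all_algebra.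
From mathcomp Require Import all_classical all_reals all_analysis.
Import Order.TTheory GRing.Theory Num.Theory.
Import numFieldNormedType.Exports.
Local Open Scope ring_scope.
Local Open Scope classical_set_scope.
Set Implicit Arguments. Unset Strict Implicit.

Lemma fin_series (R : realType) (u : nat -> R) N :
  (forall n, (N <= n)%N -> u n = 0) ->
  series u @ \oo --> \sum_(0 <= k < N) u k.
Proof.
move=> hu; apply: cvg_near_cst; exists N => // n /= Nn.
rewrite seriesEnat /= (big_cat_nat (leq0n N) Nn) /=.
have -> : \sum_(N <= i < n) u i = 0.
  by rewrite big_nat_cond; apply: big1 => i /andP[/andP[Ni _] _]; exact: hu.
by rewrite addr0.
Qed.

Lemma fin_l1 (R : realType) (u : nat -> R) N :
  (forall n, (N <= n)%N -> u n = 0) -> in_l1 u.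
Proof.
move=> hu; rewrite /in_l1.
apply/cvg_ex; eexists; apply: (@fin_series _ _ N) => n Nn.
by rewrite hu // normr0.
Qed.

Lemma fin_ser_sum (R : realType) (u : nat -> R) N :
  (forall n, (N <= n)%N -> u n = 0) -> ser_sum u = \sum_(0 <= k < N) u k.
Proof.
move=> hu; rewrite /ser_sum; apply: cvg_lim => //.
exact: fin_series.
Qed.

Lemma sum_delta (R : realType) (s : seq nat) (a : nat -> R) j :
  uniq s -> j \in s -> \sum_(i <- s) a i * (i == j)%:R = a j.
Proof.
elim: s => //= x s IH /andP[xs us]; rewrite in_cons big_cons.
case: (eqVneq j x) => [->|ne] /= hj.
  rewrite mulr1 big_seq big1 ?addr0 // => i his.
  have : i != x by apply: contraNneq xs => <-.
  by move/negbTE=> ->; rewrite mulr0.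
by rewrite mulr0 add0r IH.
Qed.

Lemma sum_iota_supp (R : realType) (s : seq nat) (f : nat -> R) N :
  uniq s -> (forall i, i \in s -> (i < N)%N) -> (forall n, n \notin s -> f n = 0) ->
  \sum_(0 <= n < N) f n = \sum_(n <- s) f n.
Proof.
move=> us sN f0.
have -> : \sum_(0 <= n < N) f n = \sum_(n <- iota 0 N | n \in s) f n.
  rewrite [RHS]big_mkcond /index_iota subn0; apply: eq_bigr => n _.
  by case: ifP => // /negbT h; rewrite f0.
rewrite -big_filter; apply: perm_big; apply: uniq_perm.
- by rewrite filter_uniq // iota_uniq.
- by [].
move=> n; rewrite mem_filter mem_iota /= add0n.
by case hn: (n \in s); rewrite ?andbF // sN.
Qed.

Lemma seq_bound (s : seq nat) : exists N, forall i, i \in s -> (i < N)%N.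
Proof.
elim: s => [|x s [N hN]]; first by exists 0%N.
exists (maxn x.+1 N) => i; rewrite in_cons => /orP[/eqP->|/hN h].
  by rewrite leq_max leqnn.
by rewrite leq_max h orbT.
Qed.

Lemma lin0 (R : realType) (H : normedModType R) (A : H -> nat -> R) :
  (forall a x y, A (a *: x + y) = (fun i => a * A x i + A y i)) ->
  forall i, A 0 i = 0.
Proof.
move=> hl i; have := congr1 (fun f => f i) (hl 1 0 0).
rewrite /= scaler0 addr0 mul1r -{1}[A 0 i]addr0 => /addrI.
by move=> <-.
Qed.

Lemma linZ (R : realType) (H : normedModType R) (A : H -> nat -> R) :
  (forall a x y, A (a *: x + y) = (fun i => a * A x i + A y i)) ->
  forall a x i, A (a *: x) i = a * A x i.
Proof.
move=> hl a x i; have := congr1 (fun f => f i) (hl a x 0).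
by rewrite /= addr0 (lin0 hl) addr0.
Qed.

Lemma linD (R : realType) (H : normedModType R) (A : H -> nat -> R) :
  (forall a x y, A (a *: x + y) = (fun i => a * A x i + A y i)) ->
  forall x y i, A (x + y) i = A x i + A y i.
Proof.
move=> hl x y i; have := congr1 (fun f => f i) (hl 1 x y).
by rewrite /= scale1r mul1r.
Qed.

Lemma linS (R : realType) (H : normedModType R) (A : H -> nat -> R) :
  (forall a x y, A (a *: x + y) = (fun i => a * A x i + A y i)) ->
  forall (s : seq nat) (f : nat -> H) i,
  A (\sum_(j <- s) f j) i = \sum_(j <- s) A (f j) i.
Proof.
move=> hl; elim=> [|x s IH] f i; first by rewrite !big_nil (lin0 hl).
by rewrite !big_cons (linD hl) IH.
Qed.

Lemma Astar_eq0 (R : realType) (H : normedModType R)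
  (inner : H -> H -> R) (A : H -> nat -> R) (Astar : (nat -> R) -> H) :
  is_inner_product inner -> is_adjoint inner A Astar ->
  forall c, in_l1 c -> (forall z, ser_sum (fun i => c i * A z i) = 0) ->
  Astar c = 0.
Proof.
move=> [_ _ _ hn] hadj c hc hz.
have := hadj c hc (Astar c); rewrite hz hn => /eqP.
by rewrite sqrf_eq0 normr_eq0 => /eqP.
Qed.

Lemma surjA (R : realType) (H : normedModType R)
  (inner : H -> H -> R) (A : H -> nat -> R) (Astar : (nat -> R) -> H) :
  is_inner_product inner ->
  (forall a x y, A (a *: x + y) = (fun i => a * A x i + A y i)) ->
  is_adjoint inner A Astar ->
  (forall u w, in_l1 u -> in_l1 w -> Astar u = Astar w -> u = w) ->
  forall s : seq nat, uniq s -> forall g : nat -> R,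
  exists w, forall i, i \in s -> A w i = g i.
Proof.
move=> hip hl hadj hinj; elim=> [|k s IH] /=.
  by move=> _ g; exists 0.
move=> /andP[ks us] g.
have {}IH := IH us.
have claim : exists z, (forall j, j \in s -> A z j = 0) /\ A z k = 1.
  apply: contrapT => hno.
  have hz0 : forall y, (forall j, j \in s -> A y j = 0) -> A y k = 0.
    move=> y hy; case: (eqVneq (A y k) 0) => // hne; exfalso; apply: hno.
    exists ((A y k)^-1 *: y); split.
      by move=> j hj; rewrite (linZ hl) (hy j hj) mulr0.
    by rewrite (linZ hl) mulVf.
  have [zz hzz] := choice (fun i => IH (fun j => (i == j)%:R)).
  pose c n : R := if n == k then 1 else if n \in s then - A (zz n) k else 0.
  have [N hN] := seq_bound (k :: s).
  have c0 : forall n, n \notin k :: s -> c n = 0.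
    move=> n; rewrite in_cons negb_or /c => /andP[/negbTE -> /negbTE ->].
    by [].
  have cN : forall n, (N <= n)%N -> c n = 0.
    move=> n Nn; apply: c0; apply/negP => /hN; rewrite ltnNge Nn.
    by [].
  have cl1 : in_l1 c := fin_l1 cN.
  have hz : forall z, ser_sum (fun i => c i * A z i) = 0.
    move=> z; rewrite (@fin_ser_sum _ _ N); last by move=> n /cN ->; rewrite mul0r.
    rewrite (@sum_iota_supp _ (k :: s)) /=; first last.
    - by move=> n /c0 ->; rewrite mul0r.
    - exact: hN.
    - by rewrite ks.
    rewrite big_cons {1}/c eqxx mul1r.
    pose y := (-1) *: (\sum_(i <- s) A z i *: zz i) + z.
    have hy : forall j, j \in s -> A y j = 0.
      move=> j hj; rewrite /y (hl _ _ _) (linS hl).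
      under eq_bigr do rewrite (linZ hl) hzz //.
      by rewrite sum_delta // mulN1r addNr.
    have e := hz0 y hy; rewrite /y (hl _ _ _) (linS hl) mulN1r in e.
    rewrite (eq_bigr (fun i => A z i * A (zz i) k)) in e; last by move=> i _; rewrite (linZ hl).
    rewrite -[RHS]e addrC; congr (_ + _).
    rewrite -sumrN big_seq [RHS]big_seq; apply: eq_bigr => i his.
    rewrite /c his; have -> : (i == k) = false.
      by apply/negbTE; apply: contraNneq ks => <-.
    by rewrite mulNr mulrC.
  have hc0 := Astar_eq0 hip hadj cl1 hz.
  have l10 : in_l1 (fun _ : nat => (0 : R)) by apply: (@fin_l1 _ _ 0%N).
  have hz' : forall z, ser_sum (fun i => (fun _ : nat => (0:R)) i * A z i) = 0.
    by move=> z; rewrite (@fin_ser_sum _ _ 0%N) ?big_geq // => n _; rewrite mul0r.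
  have := hinj _ _ cl1 l10; rewrite hc0 (Astar_eq0 hip hadj l10 hz') => /(_ erefl).
  move=> /(congr1 (fun f => f k)); rewrite /c eqxx => /eqP.
  by rewrite oner_eq0.
have [z [hzs hzk]] := claim.
have [w' hw'] := IH g.
exists ((g k - A w' k) *: z + w') => i; rewrite (hl _ _ _) in_cons.
case: (eqVneq i k) => [->|ne] /= hi.
  by rewrite hzk mulr1 subrK.
by rewrite hzs // mulr0 add0r hw'.
Qed.

Unset Implicit Arguments. Set Strict Implicit.
Local Close Scope classical_set_scope.
From mathcomp Require Import ring lra.
Theorem lemma2 (R : realType) (H : completeNormedModType R)
  (inner : H -> H -> R) (A : H -> nat -> R) (Astar : (nat -> R) -> H)
  (u_dag : nat -> R) :
  is_inner_product inner ->
  bounded_linear_to_c0 A ->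
  is_adjoint inner A Astar ->
  injective A ->
  (forall u w, in_l1 u -> in_l1 w -> Astar u = Astar w -> u = w) ->
  in_l1 u_dag ->
  (exists v : H, (forall i, `|A v i| <= 1) /\
     (forall i, u_dag i != 0 -> A v i = sgn (u_dag i))) ->
  exists v : H, [/\ (forall i, `|A v i| <= 1),
     (forall i, u_dag i != 0 -> A v i = sgn (u_dag i)) &
     (forall i, u_dag i = 0 -> `|A v i| < 1)].
Proof.
move=> hip [hl hc0 [C hC]] hadj _ hinj hu [v [hv1 hvs]].
have [N hN] : exists N, forall n, (N <= n)%N -> `|A v n| < 1/2.
  have h2 : (0:R) < 1/2 by lra.
  have := cvgr0_norm_lt _ (hc0 v) _ h2.
  by case=> N _ hN; exists N => n Nn; apply: hN.
have uN : forall n, (N <= n)%N -> u_dag n = 0.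
  move=> n Nn; case: (eqVneq (u_dag n) 0) => // hne; exfalso.
  have := hN n Nn; rewrite hvs // /sgn normrM normfV normr_id divff ?normr_eq0 //.
  lra.
have [w hw] := surjA hip hl hadj hinj (iota_uniq 0 N)
  (fun i => if u_dag i == 0 then A v i else 0).
pose M := `|C| * `|w|.
have M0 : 0 <= M by rewrite /M mulr_ge0.
pose t := (2 * (M + 1))^-1.
have t0 : 0 < t by rewrite /t invr_gt0; lra.
have t1 : t <= 1/2.
  rewrite /t -[X in _ <= X]invrK lef_pV2 ?posrE; lra.
have tM : t * M < 1/2.
  rewrite /t mulrC ltr_pdivrMr; lra.
have hAw : forall i, `|A w i| <= M.
  move=> i; apply: (le_trans (hC w i)); rewrite /M ler_wpM2r //.
  exact: ler_norm.
have key : forall i, (N <= i)%N -> `|- t * A w i + A v i| < 1.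
  move=> i Ni; apply: (le_lt_trans (ler_normD _ _)).
  rewrite normrM normrN (gtr0_norm t0).
  have := hN i Ni; have := hAw i.
  have : t * `|A w i| <= t * M by rewrite ler_wpM2l // ltW.
  lra.
exists ((-t) *: w + v); split => i; rewrite (hl _ _ _).
- case: (ltnP i N) => hiN; last exact: ltW (key i hiN).
  rewrite hw ?mem_iota ?add0n //.
  case: eqP => [_|_]; last by rewrite mulr0 add0r hv1.
  have -> : - t * A v i + A v i = (1 - t) * A v i by ring.
  rewrite normrM ger0_norm; last lra.
  have := hv1 i; have : 0 <= `|A v i| by [].
  nra.
- move=> hi; have hiN : (i < N)%N.
    by rewrite ltnNge; apply/negP => /uN; apply/eqP.
  by rewrite hw ?mem_iota ?add0n // (negbTE hi) mulr0 add0r hvs.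
- move=> hi; case: (ltnP i N) => hiN; last exact: key.
  rewrite hw ?mem_iota ?add0n // hi eqxx.
  have -> : - t * A v i + A v i = (1 - t) * A v i by ring.
  rewrite normrM ger0_norm; last lra.
  have := hv1 i; have : 0 <= `|A v i| by [].
  nra.
Qed.
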